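(* Let $U$ be a finite nonempty set, $R$ an equivalence relation on $U$, and $M(R)$ the support matroid induced by $R$. For every $X\subseteq U$, $X$ is a closed set of $M(R)$ if and only if $R_{*}(X)=X$.
   Context: For $x\in U$, $RN(x)=\{y\in U\mid xRy\}$; $R_{*}(X)=\{x\in U\mid RN(x)\subseteq X\}$ and $R^{*}(X)=\{x\in U\mid RN(x)\cap X\neq\emptyset\}$. Let $\mathbf{S}(R)=\{X\subseteq U\mid R^{*}(X)=U\}$. The support matroid $M(R)=(U,\mathbf{I}(R))$ is the matroid on $U$ whose independent sets $\mathbf{I}(R)$ are the subsets of inclusion-minimal members of $\mathbf{S}(R)$. For a matroid $(U,\mathbf{I})$, the rank is $r(X)=\max\{|I|\mid I\subseteq X, I\in\mathbf{I}\}$, the closure is $cl(X)=\{e\in U\mid r(X)=r(X\cup\{e\})\}$, and $X$ is closed if $cl(X)=X$. *)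

(* Defs.v *)
From mathcomp Require Import all_boot.
Set Implicit Arguments. Unset Strict Implicit. Unset Printing Implicit Defensive.

Section Support.
Variables (U : finType) (R : rel U).

Definition RN (x : U) : {set U} := [set y | R x y].
Definition lower_approx (X : {set U}) : {set U} := [set x | RN x \subset X].
Definition upper_approx (X : {set U}) : {set U} := [set x | RN x :&: X != set0].
Definition supportS : {set {set U}} := [set X : {set U} | upper_approx X == setT].
Definition indepR (I : {set U}) : bool :=
  [exists X : {set U}, minset (fun Y : {set U} => Y \in supportS) X && (I \subset X)].
Definition rankR (X : {set U}) : nat :=
  \max_(I : {set U} | indepR I && (I \subset X)) #|I|.
Definition clR (X : {set U}) : {set U} := [set e | rankR X == rankR (e |: X)].
Definition closedR (X : {set U}) : Prop := clR X = X.
End Support.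

(* Main.v *)
Require Import Defs.
From mathcomp Require Import all_boot.
Set Implicit Arguments. Unset Strict Implicit. Unset Printing Implicit Defensive.

Section S.
Variables (U : finType) (R : rel U).
Hypotheses (Hrefl : reflexive R) (Hsym : symmetric R) (Htrans : transitive R).

Definition pt (I : {set U}) : bool :=
  [forall x in I, forall y in I, R x y ==> (x == y)].

Lemma ptP (I : {set U}) : reflect {in I &, forall x y, R x y -> x = y} (pt I).
Proof.
apply: (iffP forall_inP) => [H x y xI yI Rxy | H x xI].
  by have /forall_inP/(_ y yI)/implyP/(_ Rxy)/eqP := H x xI.
by apply/forall_inP => y yI; apply/implyP => Rxy; apply/eqP; apply: H.
Qed.

Lemma inS (X : {set U}) : (X \in supportS R) = [forall z, [exists x in X, R z x]].
Proof.
rewrite inE; apply/eqP/forallP => [H z | H].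
  have : z \in upper_approx R X by rewrite H inE.
  rewrite inE => /set0Pn [x]; rewrite !inE => /andP[Rzx xX].
  by apply/exists_inP; exists x.
apply/setP => z; rewrite !inE; have /exists_inP[x xX Rzx] := H z.
by apply/set0Pn; exists x; rewrite !inE Rzx.
Qed.

Lemma pt_min X : pt X -> X \in supportS R ->
  minset (fun Y : {set U} => Y \in supportS R) X.
Proof.
move=> /ptP ptX SX; apply/minsetP; split=> // Y SY YX.
apply/eqP; rewrite eqEsubset YX /=; apply/subsetP => t tX.
move: SY; rewrite inS => /forallP/(_ t)/exists_inP[y yY Rty].
by rewrite (ptX t y tX (subsetP YX y yY) Rty).
Qed.

Lemma min_pt X : minset (fun Y : {set U} => Y \in supportS R) X -> pt X.
Proof.
move=> /minsetP[SX minX]; apply/ptP => x y xX yX Rxy.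
apply/eqP; apply/negPn/negP => nxy.
have SY : X :\ y \in supportS R.
  rewrite inS; apply/forallP => z; move: SX; rewrite inS => /forallP/(_ z).
  case/exists_inP => w wX Rzw; apply/exists_inP.
  case: (eqVneq w y) => [ewy|nwy].
    exists x; last by apply: (Htrans Rzw); rewrite ewy Hsym.
    by rewrite !inE xX andbT.
  by exists w; rewrite // !inE nwy.
have := minX _ SY (subsetDl _ _) => /setP/(_ y).
by rewrite !inE eqxx yX.
Qed.

Lemma indepP I : indepR R I = pt I.
Proof.
apply/existsP/idP => [[X /andP[mX IX]] | ptI].
  by have /ptP ptX := min_pt mX; apply/ptP => x y xI yI; apply: ptX; apply: (subsetP IX).
have [X mX IX] := maxset_exists ptI.
have [ptX maxX] := maxsetP mX.
exists X; rewrite IX andbT; apply: pt_min => //.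
rewrite inS; apply/forallP => z; case: (boolP [exists x in X, R z x]) => // /negP nz.
have ptz : pt (z |: X).
  apply/ptP => x y; rewrite !inE => /orP[/eqP->|xX] /orP[/eqP->|yX] Rxy //.
  - by case: nz; apply/exists_inP; exists y.
  - by case: nz; apply/exists_inP; exists x; rewrite // Hsym.
  - by apply: (ptP _ ptX).
have := maxX _ ptz (subsetUr _ _) => /setP/(_ z); rewrite !inE eqxx /= => zX.
by case: nz; apply/exists_inP; exists z.
Qed.

Lemma RNeq x y : RN R x = RN R y <-> R x y.
Proof.
split => [E | Rxy].
  have : y \in RN R x by rewrite E inE Hrefl.
  by rewrite inE.
apply/setP => z; rewrite !inE; apply/idP/idP => H.
  by apply: Htrans H; rewrite Hsym.
by apply: Htrans H.
Qed.

Lemma rankE X : rankR R X = #|RN R @: X|.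
Proof.
apply/eqP; rewrite eqn_leq; apply/andP; split.
  apply/bigmax_leqP => I /andP[]; rewrite indepP => /ptP ptI IX.
  rewrite -(card_in_imset (f := RN R)); first by apply/subset_leq_card/imsetS.
  by move=> x y xI yI /RNeq; apply: ptI.
have P0 : pt set0 && (set0 \subset X).
  by rewrite sub0set andbT; apply/ptP => x y; rewrite inE.
have [I mI _] := @maxset_exists _ (fun I => pt I && (I \subset X)) set0 P0.
have [/andP[ptI IX] maxI] := maxsetP mI.
have -> : RN R @: X = RN R @: I.
  apply/eqP; rewrite eqEsubset (imsetS _ IX) andbT.
  apply/subsetP => _ /imsetP[x xX ->].
  case: (boolP [exists i in I, R x i]) => [/exists_inP[i iI Rxi]|/negP nx].
    by apply/imsetP; exists i => //; apply/RNeq.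
  have P1 : pt (x |: I) && (x |: I \subset X).
    rewrite subUset sub1set xX IX !andbT; apply/ptP => a b.
    rewrite !inE => /orP[/eqP->|aI] /orP[/eqP->|bI] Rab //.
    - by case: nx; apply/exists_inP; exists b.
    - by case: nx; apply/exists_inP; exists a; rewrite // Hsym.
    - by apply: (ptP _ ptI).
  have := maxI _ P1 (subsetUr _ _) => /setP/(_ x); rewrite !inE eqxx /= => xI.
  by apply: imset_f.
rewrite (card_in_imset (f := RN R)); last by move=> a b aI bI /RNeq; apply: (ptP _ ptI).
by apply: leq_bigmax_cond; rewrite indepP ptI.
Qed.

Lemma clE X e : (e \in clR R X) = [exists x in X, R e x].
Proof.
rewrite inE !rankE imsetU1 cardsU1.
case: (boolP (RN R e \in RN R @: X)) => [/imsetP[x xX /RNeq Rex]|nin].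
  by rewrite eqxx; symmetry; apply/exists_inP; exists x.
rewrite /= add1n (ltn_eqF (ltnSn _)); symmetry; apply/negbTE.
apply: contra nin => /exists_inP[x xX Rex]; apply/imsetP; exists x => //.
exact/RNeq.
Qed.

End S.

Theorem corollary2 (U : finType) (R : rel U)
  (HU : 0 < #|U|)
  (Hrefl : reflexive R) (Hsym : symmetric R) (Htrans : transitive R) :
  forall X : {set U}, closedR R X <-> lower_approx R X = X.
Proof.
move=> X; rewrite /closedR; split => H; apply/setP => e.
- rewrite inE; apply/idP/idP => [/subsetP sub|eX]; first by apply: sub; rewrite inE.
  apply/subsetP => y; rewrite inE => Rey; rewrite -H clE //.
  by apply/exists_inP; exists e; rewrite // Hsym.
- rewrite clE //; apply/idP/idP => [/exists_inP[x xX Rex]|eX].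
    have : x \in lower_approx R X by rewrite H.
    by rewrite inE => /subsetP; apply; rewrite inE Hsym.
  by apply/exists_inP; exists e.
Qed.
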